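(* Let $a,b,c$ be positive numbers with $a<b<c$ and $b-a<c_0<a$, where $c_0=c-\lfloor c/b\rfloor b$. Let $H=[c_0+a-b,c_0)+a\mathbb Z$ and $\tilde H=[c-c_0,c-c_0+b-a)+a\mathbb Z$. Then: (i) $\mathcal S_{a,b,c}$ satisfies $R_{a,b,c}\mathcal S_{a,b,c}\subset\mathcal S_{a,b,c}$, $\tilde R_{a,b,c}\mathcal S_{a,b,c}\subset\mathcal S_{a,b,c}$ and $\mathcal S_{a,b,c}\cap(H\cup\tilde H)=\emptyset$; and every set $E\subset\mathbb R$ with $R_{a,b,c}E\subset E$, $\tilde R_{a,b,c}E\subset E$ and $E\cap(H\cup\tilde H)=\emptyset$ satisfies $E\subset\mathcal S_{a,b,c}$. (ii) $\mathbb R\setminus\mathcal S_{a,b,c}$ satisfies $R_{a,b,c}(\mathbb R\setminus\mathcal S_{a,b,c})\subset\mathbb R\setminus\mathcal S_{a,b,c}$, $\tilde R_{a,b,c}(\mathbb R\setminus\mathcal S_{a,b,c})\subset\mathbb R\setminus\mathcal S_{a,b,c}$ and contains $H\cup\tilde H$; and every set $F$ with $R_{a,b,c}F\subset F$, $\tilde R_{a,b,c}F\subset F$ and $H\cup\tilde H\subset F$ contains $\mathbb R\setminus\mathcal S_{a,b,c}$.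
   Context: For $a,b,c>0$ and $t\in\mathbb R$, $\mathbf M_{a,b,c}(t)=(\chi_{[0,c)}(t-\mu+\lambda))_{\mu\in a\mathbb Z,\lambda\in b\mathbb Z}$ is the infinite matrix with rows indexed by $a\mathbb Z$ and columns by $b\mathbb Z$, acting by $(\mathbf M_{a,b,c}(t)\mathbf x)(\mu)=\sum_{\lambda\in b\mathbb Z}\chi_{[0,c)}(t-\mu+\lambda)\mathbf x(\lambda)$. $\mathcal B_b$ is the set of vectors $(\mathbf x(\lambda))_{\lambda\in b\mathbb Z}$ with entries in $\{0,1\}$, and $\mathcal B_b^0=\{\mathbf x\in\mathcal B_b:\mathbf x(0)=1\}$. $\mathbf 1$ denotes the vector indexed by $a\mathbb Z$ with all entries $1$. $\mathcal S_{a,b,c}=\{t:\mathbf M_{a,b,c}(t)\mathbf x=\mathbf 1\text{ for some }\mathbf x\in\mathcal B_b^0\}$. With $c_0=c-\lfloor c/b\rfloor b$ and $b-a<c_0<a$, the piecewise linear maps $R_{a,b,c},\tilde R_{a,b,c}:\mathbb R\to\mathbb R$ are: $R_{a,b,c}(t)=t+\lfloor c/b\rfloor b+b$ if $t\in[0,c_0+a-b)+a\mathbb Z$, $R_{a,b,c}(t)=t$ if $t\in[c_0+a-b,c_0)+a\mathbb Z$, $R_{a,b,c}(t)=t+\lfloor c/b\rfloor b$ if $t\in[c_0,a)+a\mathbb Z$; $\tilde R_{a,b,c}(t)=t-\lfloor c/b\rfloor b$ if $t\in[c-a,c-c_0)+a\mathbb Z$, $\tilde R_{a,b,c}(t)=t$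 if $t\in[c-c_0,c-c_0+b-a)+a\mathbb Z$, $\tilde R_{a,b,c}(t)=t-\lfloor c/b\rfloor b-b$ if $t\in[c-c_0+b-a,c)+a\mathbb Z$. Here $A+a\mathbb Z=\{x+ak:x\in A,k\in\mathbb Z\}$. *)

(* Defs.v *)
From Stdlib Require Import Reals Lra Lia ZArith ClassicalDescription.
Open Scope R_scope.

Definition chi (c x : R) : R :=
  if Rle_dec 0 x then (if Rlt_dec x c then 1 else 0) else 0.

(* A 0/1 vector indexed by bZ : entry x(b*k) is represented by x k. *)
(* Term of the row mu = a*m of M_{a,b,c}(t) x at column lambda = b*k. *)
Definition Mterm (a b c t : R) (x : Z -> bool) (m k : Z) : R :=
  chi c (t - a * IZR m + b * IZR k) * (if x k then 1 else 0).

Definition Mpartial (a b c t : R) (x : Z -> bool) (m : Z) (N : nat) : R :=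
  sum_f_R0 (fun i => Mterm a b c t x m (Z.of_nat i - Z.of_nat N)%Z) (2 * N).

(* (M_{a,b,c}(t) x)(a*m) = v : the series over bZ (which has only finitely
   many nonzero terms) sums to v. *)
Definition Mrow_eq (a b c t : R) (x : Z -> bool) (m : Z) (v : R) : Prop :=
  exists N0 : nat, forall N : nat, (N0 <= N)%nat -> Mpartial a b c t x m N = v.

Definition S_abc (a b c : R) (t : R) : Prop :=
  exists x : Z -> bool, x 0%Z = true /\ forall m : Z, Mrow_eq a b c t x m 1.

Definition in_per (a u v t : R) : Prop :=
  exists k : Z, u <= t - a * IZR k < v.

Definition flcb (b c : R) : R := IZR (Int_part (c / b)).
Definition c0 (b c : R) : R := c - flcb b c * b.

Definition Rmap (a b c t : R) : R :=
  if excluded_middle_informative (in_per a 0 (c0 b c + a - b) t)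
  then t + flcb b c * b + b
  else if excluded_middle_informative (in_per a (c0 b c + a - b) (c0 b c) t)
  then t
  else t + flcb b c * b.   (* t in [c0, a) + aZ *)

Definition Rtmap (a b c t : R) : R :=
  if excluded_middle_informative (in_per a (c - a) (c - c0 b c) t)
  then t - flcb b c * b
  else if excluded_middle_informative
            (in_per a (c - c0 b c) (c - c0 b c + b - a) t)
  then t
  else t - flcb b c * b - b.   (* t in [c - c0 + b - a, c) + aZ *)

Definition Hset (a b c t : R) : Prop := in_per a (c0 b c + a - b) (c0 b c) t.
Definition Htset (a b c t : R) : Prop :=
  in_per a (c - c0 b c) (c - c0 b c + b - a) t.

Definition maps_into (f : R -> R) (E : R -> Prop) : Prop :=
  forall t, E t -> E (f t).

(* Main.v *)
Require Import Defs.
From Stdlib Require Import Reals Lra Lia ZArith ClassicalDescription Classical.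
Open Scope R_scope.

Definition W (a b c t : R) (m k : Z) : Prop :=
  a * IZR m <= t + b * IZR k /\ t + b * IZR k - c < a * IZR m.

Definition Good (a b c t : R) (x : Z -> bool) : Prop :=
  x 0%Z = true /\ forall m, exists k, (x k = true /\ W a b c t m k) /\
     forall k', x k' = true -> W a b c t m k' -> k' = k.

Lemma Mterm_one a b c t x m k : x k = true -> W a b c t m k -> Mterm a b c t x m k = 1.
Proof. intros Hx [H1 H2]. unfold Mterm, chi. rewrite Hx.
  destruct (Rle_dec 0 (t - a * IZR m + b * IZR k)); [|lra].
  destruct (Rlt_dec (t - a * IZR m + b * IZR k) c); lra. Qed.

Lemma Mterm_zero a b c t x m k : ~ (x k = true /\ W a b c t m k) -> Mterm a b c t x m k = 0.
Proof. intros H. unfold Mterm, chi.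
  destruct (x k) eqn:Hx.
  - destruct (Rle_dec 0 (t - a * IZR m + b * IZR k)); [|lra].
    destruct (Rlt_dec (t - a * IZR m + b * IZR k) c); [|lra].
    exfalso; apply H; split; [reflexivity|]; unfold W; split; lra.
  - ring. Qed.

Lemma Mterm_nonneg a b c t x m k : 0 <= Mterm a b c t x m k.
Proof. unfold Mterm, chi. destruct (x k); destruct (Rle_dec _ _); try destruct (Rlt_dec _ _); lra. Qed.

Lemma sum_zero (f : nat -> R) n : (forall i, (i <= n)%nat -> f i = 0) -> sum_f_R0 f n = 0.
Proof. induction n; intros H; simpl. apply H; lia.
  rewrite IHn by (intros; apply H; lia). rewrite H by lia. ring. Qed.

Lemma sum_single (f : nat -> R) n i0 : (i0 <= n)%nat ->
  (forall i, (i <= n)%nat -> i <> i0 -> f i = 0) -> sum_f_R0 f n = f i0.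
Proof. induction n; intros Hi H; simpl.
 - replace i0 with 0%nat by lia; reflexivity.
 - destruct (Nat.eq_dec i0 (S n)).
   + subst. rewrite sum_zero. ring. intros; apply H; lia.
   + rewrite IHn by (try lia; intros; apply H; lia). rewrite (H (S n)) by lia. ring.
Qed.

Lemma sum_nonneg (f : nat -> R) n : (forall i, 0 <= f i) -> 0 <= sum_f_R0 f n.
Proof. intros Hf; induction n; simpl; [apply Hf|]. specialize (Hf (S n)); lra. Qed.

Lemma sum_ge1 (f : nat -> R) n i0 : (forall i, 0 <= f i) -> (i0 <= n)%nat -> f i0 <= sum_f_R0 f n.
Proof. intros Hf. induction n; intros Hi; simpl.
 - replace i0 with 0%nat by lia; lra.
 - destruct (Nat.eq_dec i0 (S n)).
   + subst. pose proof (sum_nonneg f n Hf). lra.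
   + specialize (IHn ltac:(lia)). specialize (Hf (S n)). lra. Qed.

Lemma sum_ge2 (f : nat -> R) n i0 i1 : (forall i, 0 <= f i) -> (i0 < i1)%nat -> (i1 <= n)%nat ->
  f i0 + f i1 <= sum_f_R0 f n.
Proof. intros Hf Hlt. induction n; intros Hi; simpl.
 - lia.
 - destruct (Nat.eq_dec i1 (S n)).
   + subst. pose proof (sum_ge1 f n i0 Hf ltac:(lia)). lra.
   + specialize (IHn ltac:(lia)). specialize (Hf (S n)). lra. Qed.

Lemma S_Good a b c t : S_abc a b c t -> exists x, Good a b c t x.
Proof.
  intros [x [Hx0 Hrow]]. exists x. split; [exact Hx0|]. intros m.
  destruct (Hrow m) as [N0 HN].
  destruct (classic (exists k, x k = true /\ W a b c t m k)) as [[k Hk]|Hno].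
  - exists k. split; [exact Hk|]. intros k' Hk'1 Hk'2.
    destruct (Z.eq_dec k' k) as [e|ne]; [exact e|exfalso].
    set (N := (N0 + Z.to_nat (Z.abs k) + Z.to_nat (Z.abs k'))%nat).
    specialize (HN N ltac:(unfold N; lia)). unfold Mpartial in HN.
    set (f := fun i => Mterm a b c t x m (Z.of_nat i - Z.of_nat N)%Z) in HN.
    set (i1 := Z.to_nat (k + Z.of_nat N)). set (i2 := Z.to_nat (k' + Z.of_nat N)).
    assert (F1 : f i1 = 1). { unfold f, i1.
      replace (Z.of_nat (Z.to_nat (k + Z.of_nat N)) - Z.of_nat N)%Z with k by (unfold N; lia).
      apply Mterm_one; tauto. }
    assert (F2 : f i2 = 1). { unfold f, i2.
      replace (Z.of_nat (Z.to_nat (k' + Z.of_nat N)) - Z.of_nat N)%Z with k' by (unfold N; lia).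
      apply Mterm_one; tauto. }
    assert (Hnn : forall i, 0 <= f i) by (intros; apply Mterm_nonneg).
    destruct (Nat.lt_total i1 i2) as [Hlt|[Heq|Hgt]].
    + pose proof (sum_ge2 f (2*N) i1 i2 Hnn Hlt ltac:(unfold i2, N; lia)). lra.
    + unfold i1, i2, N in Heq; lia.
    + pose proof (sum_ge2 f (2*N) i2 i1 Hnn Hgt ltac:(unfold i1, N; lia)). lra.
  - exfalso. specialize (HN N0 (le_n _)). unfold Mpartial in HN. rewrite sum_zero in HN. lra.
    intros i _. apply Mterm_zero. intros Hc; apply Hno; eauto.
Qed.

Lemma Good_S a b c t x : Good a b c t x -> S_abc a b c t.
Proof. intros [Hx0 H]. exists x. split; [exact Hx0|]. intros m.
  destruct (H m) as [k [Hk Huniq]].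
  exists (Z.to_nat (Z.abs k)). intros N HN. unfold Mpartial.
  rewrite (sum_single _ (2*N) (Z.to_nat (k + Z.of_nat N))).
  - cbv beta. replace (Z.of_nat (Z.to_nat (k + Z.of_nat N)) - Z.of_nat N)%Z with k by lia.
    apply Mterm_one; tauto.
  - lia.
  - intros i Hi Hne. apply Mterm_zero. intros [Hxk Hw]. apply Hne.
    pose proof (Huniq _ Hxk Hw). lia.
Qed.

Lemma Good_shift a b c t x K : Good a b c t x -> x K = true ->
  Good a b c (t + b * IZR K) (fun k => x (k + K)%Z).
Proof. intros [H0 H] HK. split. exact HK.
  intros m. destruct (H m) as [k [[Hxk Hw] Hu]]. exists (k - K)%Z. split.
  - split. replace (k - K + K)%Z with k by ring. exact Hxk.
    unfold W in *. rewrite minus_IZR. lra.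
  - intros k' Hx' Hw'. assert (k' + K = k)%Z; [|lia].
    apply Hu; [exact Hx'|]. unfold W in *. rewrite plus_IZR. lra.
Qed.

Lemma decomp a al t : 0 < a -> exists k, al <= t - a * IZR k < al + a.
Proof. intros Ha. destruct (base_Int_part ((t - al)/a)) as [H1 H2].
  exists (Int_part ((t - al)/a)). set (q := IZR (Int_part ((t-al)/a))) in *.
  set (y := (t - al)/a) in *. assert (t = al + a * y) by (unfold y; field; lra).
  split; nra. Qed.

Lemma per_disj a t k k' u1 v1 u2 v2 : 0 < a -> u1 <= t - a*IZR k < v1 ->
  u2 <= t - a * IZR k' < v2 -> v1 <= u2 -> v2 <= u1 + a -> False.
Proof. intros Ha H1 H2 H3 H4.
  assert (A1 : IZR (k' - k) < 0) by (rewrite minus_IZR; nra).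
  assert (A2 : -1 < IZR (k' - k)) by (rewrite minus_IZR; nra).
  apply lt_IZR in A1. change (-1) with (IZR (-1)) in A2. apply lt_IZR in A2. lia. Qed.

Definition Hyp a b c := 0 < a /\ a < b /\ b < c /\ b - a < c0 b c /\ c0 b c < a.

Lemma hyp_facts a b c : Hyp a b c ->
  c = IZR (Int_part (c/b)) * b + c0 b c /\ (1 <= Int_part (c/b))%Z.
Proof. intros (H1&H2&H3&H4&H5). split. unfold c0, flcb; ring.
  assert (0 < IZR (Int_part (c/b))). { unfold c0, flcb in *. nra. }
  apply lt_IZR in H. lia. Qed.

Lemma fwd a b c t x p : Hyp a b c -> Good a b c t x -> 0 <= t - a * IZR p < a ->
  exists k', x k' = true /\ (1 <= k')%Z /\ b * IZR k' < c + a - (t - a*IZR p) /\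
  (Int_part (c/b) <= k')%Z /\ (t - a * IZR p < c0 b c -> (Int_part (c/b) + 1 <= k')%Z).
Proof.
  intros Hy [G0 G] Hr. pose proof (hyp_facts _ _ _ Hy) as [Hc Hn].
  destruct Hy as (H1&H2&H3&H4&H5).
  set (n := Int_part (c/b)) in *. set (C0 := c0 b c) in *.
  remember (t - a * IZR p) as r eqn:Er.
  destruct (G (p+1)%Z) as [k' [[Hxk [W1 W2]] _]]. rewrite plus_IZR in W1, W2.
  assert (Hk1 : (1 <= k')%Z). { assert (0 < IZR k') by nra. apply lt_IZR in H. lia. }
  assert (Hc' : forall k'', x k'' = true -> (1 <= k'')%Z -> b * IZR k'' < c - r -> False).
  { intros k'' Hx'' Hk'' Hb. destruct (G p) as [k0 [_ U]].
    pose proof (IZR_le _ _ Hk'') as Hk2.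
    assert (E1 : k'' = k0) by (apply U; [exact Hx''|]; unfold W; split; nra).
    assert (E2 : 0%Z = k0) by (apply U; [exact G0|]; unfold W; split; nra).
    lia. }
  exists k'. split; [exact Hxk|]. split; [exact Hk1|]. split; [lra|]. split.
  - destruct (Z_le_gt_dec n k') as [h|h]; [exact h|exfalso].
    assert (IZR k' <= IZR n - 1) by (rewrite <- minus_IZR; apply IZR_le; lia).
    apply (Hc' k'); auto. nra.
  - intros Hrc. destruct (Z_le_gt_dec (n+1) k') as [h|h]; [exact h|exfalso].
    assert (IZR k' <= IZR n) by (apply IZR_le; lia).
    apply (Hc' k'); auto. nra.
Qed.

Lemma bwd a b c t x q : Hyp a b c -> Good a b c t x -> 0 <= t - c - a*IZR q < a ->
  exists k', x k' = true /\ (k' <= -1)%Z /\ - c - (t - c - a*IZR q) <= b * IZR k' /\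
  (k' <= - Int_part (c/b))%Z /\
  (a - c0 b c <= t - c - a*IZR q -> (k' <= - Int_part (c/b) - 1)%Z).
Proof.
  intros Hy [G0 G] Hr. pose proof (hyp_facts _ _ _ Hy) as [Hc Hn].
  destruct Hy as (H1&H2&H3&H4&H5).
  set (n := Int_part (c/b)) in *. set (C0 := c0 b c) in *.
  remember (t - c - a * IZR q) as r eqn:Er.
  destruct (G q) as [k' [[Hxk [W1 W2]] _]].
  assert (Hk1 : (k' <= -1)%Z). { assert (IZR k' < 0) by nra. apply lt_IZR in H. lia. }
  assert (Hc' : forall k'', x k'' = true -> (k'' <= -1)%Z -> a - r - c <= b * IZR k'' -> False).
  { intros k'' Hx'' Hk'' Hb. destruct (G (q+1)%Z) as [k0 [_ U]].
    pose proof (IZR_le _ _ Hk'') as Hk2. change (IZR (-1)) with (-1) in Hk''.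
    assert (E1 : k'' = k0) by (apply U; [exact Hx''|]; unfold W; rewrite plus_IZR; split; nra).
    assert (E2 : 0%Z = k0) by (apply U; [exact G0|]; unfold W; rewrite plus_IZR; split; nra).
    lia. }
  exists k'. split; [exact Hxk|]. split; [exact Hk1|]. split; [lra|]. split.
  - destruct (Z_le_gt_dec k' (-n)) as [h|h]; [exact h|exfalso].
    assert (- IZR n + 1 <= IZR k') by (rewrite <- opp_IZR, <- plus_IZR; apply IZR_le; lia).
    apply (Hc' k'); auto. nra.
  - intros Hrc. destruct (Z_le_gt_dec k' (-n-1)) as [h|h]; [exact h|exfalso].
    assert (- IZR n <= IZR k') by (rewrite <- opp_IZR; apply IZR_le; lia).
    apply (Hc' k'); auto. nra.
Qed.

Lemma conv_lt (k n s : Z) : IZR k < IZR n + IZR s -> (k < n + s)%Z.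
Proof. intros; apply lt_IZR; rewrite plus_IZR; auto. Qed.
Lemma conv_gt (k n s : Z) : IZR n + IZR s < IZR k -> (n + s < k)%Z.
Proof. intros; apply lt_IZR; rewrite plus_IZR; auto. Qed.

Lemma noH a b c t x : Hyp a b c -> Good a b c t x -> ~ Hset a b c t.
Proof.
  intros Hy G [p Hp]. pose proof (hyp_facts _ _ _ Hy) as [Hc Hn]. pose proof Hy as (H1&H2&H3&H4&H5).
  destruct (fwd a b c t x p Hy G ltac:(lra)) as [k' (Hx&Hk1&Hb&Hkn&Hk2)].
  specialize (Hk2 ltac:(lra)).
  assert (k' < Int_part (c/b) + 1)%Z by (apply conv_lt; nra). lia. Qed.

Lemma noHt a b c t x : Hyp a b c -> Good a b c t x -> ~ Htset a b c t.
Proof.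
  intros Hy G [k Hk]. pose proof (hyp_facts _ _ _ Hy) as [Hc Hn]. pose proof Hy as (H1&H2&H3&H4&H5).
  destruct (bwd a b c t x (k-1) Hy G ltac:(rewrite minus_IZR; lra)) as [k' (Hx&Hk1&Hb&Hkn&Hk2)].
  rewrite minus_IZR in Hb, Hk2. specialize (Hk2 ltac:(lra)).
  assert (- Int_part (c/b) + -1 < k')%Z by (apply conv_gt; rewrite opp_IZR; nra). lia. Qed.

Lemma R_S a b c t x : Hyp a b c -> Good a b c t x -> S_abc a b c (Rmap a b c t).
Proof.
  intros Hy G. pose proof (hyp_facts _ _ _ Hy) as [Hc Hn]. pose proof Hy as (H1&H2&H3&H4&H5).
  unfold Rmap, flcb.
  destruct (excluded_middle_informative (in_per a 0 (c0 b c + a - b) t)) as [[p Hp]|N1].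
  - destruct (fwd a b c t x p Hy G ltac:(lra)) as [k' (Hx&Hk1&Hb&Hkn&Hk2)].
    specialize (Hk2 ltac:(lra)).
    assert (k' < Int_part (c/b) + 2)%Z by (apply conv_lt; nra).
    assert (E : k' = (Int_part (c/b) + 1)%Z) by lia. rewrite E in Hx.
    pose proof (Good_S _ _ _ _ _ (Good_shift _ _ _ _ _ _ G Hx)) as HS.
    replace (t + IZR (Int_part (c / b)) * b + b) with (t + b * IZR (Int_part (c / b) + 1))
      by (rewrite plus_IZR; ring). exact HS.
  - destruct (excluded_middle_informative (in_per a (c0 b c + a - b) (c0 b c) t)) as [Hh|N2].
    + exact (Good_S _ _ _ _ _ G).
    + destruct (decomp a 0 t H1) as [p Hp].
      assert (c0 b c <= t - a * IZR p).
      { destruct (Rlt_le_dec (t - a * IZR p) (c0 b c)); [exfalso|lra].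
        destruct (Rlt_le_dec (t - a * IZR p) (c0 b c + a - b)).
        - apply N1; exists p; lra.
        - apply N2; exists p; lra. }
      destruct (fwd a b c t x p Hy G ltac:(lra)) as [k' (Hx&Hk1&Hb&Hkn&Hk2)].
      assert (k' < Int_part (c/b) + 1)%Z by (apply conv_lt; nra).
      assert (E : k' = Int_part (c/b)) by lia. rewrite E in Hx.
      pose proof (Good_S _ _ _ _ _ (Good_shift _ _ _ _ _ _ G Hx)) as HS.
      replace (t + IZR (Int_part (c / b)) * b) with (t + b * IZR (Int_part (c / b)))
        by ring. exact HS.
Qed.

Lemma Rt_S a b c t x : Hyp a b c -> Good a b c t x -> S_abc a b c (Rtmap a b c t).
Proof.
  intros Hy G. pose proof (hyp_facts _ _ _ Hy) as [Hc Hn]. pose proof Hy as (H1&H2&H3&H4&H5).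
  unfold Rtmap, flcb.
  destruct (excluded_middle_informative (in_per a (c - a) (c - c0 b c) t)) as [[k Hk]|N1].
  - destruct (bwd a b c t x (k-1) Hy G ltac:(rewrite minus_IZR; lra)) as [k' (Hx&Hk1&Hb&Hkn&Hk2)].
    rewrite minus_IZR in Hb.
    assert (- Int_part (c/b) + -1 < k')%Z by (apply conv_gt; rewrite opp_IZR; nra).
    assert (E : k' = (- Int_part (c/b))%Z) by lia. rewrite E in Hx.
    pose proof (Good_S _ _ _ _ _ (Good_shift _ _ _ _ _ _ G Hx)) as HS.
    replace (t - IZR (Int_part (c / b)) * b) with (t + b * IZR (- Int_part (c / b)))
      by (rewrite opp_IZR; ring). exact HS.
  - destruct (excluded_middle_informative (in_per a (c - c0 b c) (c - c0 b c + b - a) t)) as [Hh|N2].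
    + exact (Good_S _ _ _ _ _ G).
    + destruct (decomp a (c - a) t H1) as [k Hk].
      assert (c - c0 b c + b - a <= t - a * IZR k).
      { destruct (Rlt_le_dec (t - a * IZR k) (c - c0 b c + b - a)); [exfalso|lra].
        destruct (Rlt_le_dec (t - a * IZR k) (c - c0 b c)).
        - apply N1; exists k; lra.
        - apply N2; exists k; lra. }
      destruct (bwd a b c t x (k-1) Hy G ltac:(rewrite minus_IZR; lra)) as [k' (Hx&Hk1&Hb&Hkn&Hk2)].
      rewrite minus_IZR in Hb, Hk2. specialize (Hk2 ltac:(lra)).
      assert (- Int_part (c/b) + -2 < k')%Z by (apply conv_gt; rewrite opp_IZR; nra).
      assert (E : k' = (- Int_part (c/b) - 1)%Z) by lia. rewrite E in Hx.
      pose proof (Good_S _ _ _ _ _ (Good_shift _ _ _ _ _ _ G Hx)) as HS.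
      replace (t - IZR (Int_part (c / b)) * b - b) with (t + b * IZR (- Int_part (c / b) - 1))
        by (rewrite minus_IZR, opp_IZR; ring). exact HS.
Qed.

Lemma Zstep a p m : 0 < a -> a * IZR p < a * IZR m -> a * IZR p + a <= a * IZR m.
Proof. intros Ha H. assert (IZR p < IZR m) by nra. apply lt_IZR in H0.
  assert (IZR (p+1) <= IZR m) by (apply IZR_le; lia). rewrite plus_IZR in H1. nra. Qed.

Lemma R_step a b c u : Hyp a b c -> ~ Hset a b c u ->
  (exists K, (1 <= K)%Z /\ Rmap a b c u = u + b * IZR K) /\
  (forall m, Rmap a b c u - c < a * IZR m <-> u < a * IZR m).
Proof.
  intros Hy NH. pose proof (hyp_facts _ _ _ Hy) as [Hc Hn]. pose proof Hy as (H1&H2&H3&H4&H5).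
  unfold Rmap, flcb.
  destruct (excluded_middle_informative (in_per a 0 (c0 b c + a - b) u)) as [[p Hp]|N1].
  - split. exists (Int_part (c/b) + 1)%Z. split; [lia|]. rewrite plus_IZR; ring.
    intros m; split; intros Hm. lra.
    assert (a * IZR p < a * IZR m) by lra. pose proof (Zstep a p m H1 H). lra.
  - destruct (excluded_middle_informative (in_per a (c0 b c + a - b) (c0 b c) u)) as [Hh|N2].
    + exfalso; exact (NH Hh).
    + destruct (decomp a 0 u H1) as [p Hp].
      assert (c0 b c <= u - a * IZR p).
      { destruct (Rlt_le_dec (u - a * IZR p) (c0 b c)); [exfalso|lra].
        destruct (Rlt_le_dec (u - a * IZR p) (c0 b c + a - b)).
        - apply N1; exists p; lra.
        - apply N2; exists p; lra. }
      split. exists (Int_part (c/b)). split; [lia|]. ring.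
      intros m; split; intros Hm; [|lra].
      assert (a * IZR p < a * IZR m) by lra. pose proof (Zstep a p m H1 H0). lra.
Qed.

Lemma Rmap_shift a b c u : exists K, Rmap a b c u = u + b * IZR K.
Proof. unfold Rmap, flcb.
  destruct (excluded_middle_informative _).
  exists (Int_part (c/b) + 1)%Z. rewrite plus_IZR; ring.
  destruct (excluded_middle_informative _). exists 0%Z; ring.
  exists (Int_part (c/b)); ring. Qed.

Lemma Rtmap_shift a b c u : exists K, Rtmap a b c u = u + b * IZR K.
Proof. unfold Rtmap, flcb.
  destruct (excluded_middle_informative _).
  exists (- Int_part (c/b))%Z. rewrite opp_IZR; ring.
  destruct (excluded_middle_informative _). exists 0%Z; ring.
  exists (- Int_part (c/b) - 1)%Z. rewrite minus_IZR, opp_IZR; ring. Qed.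

Lemma RtR a b c u : Hyp a b c -> ~ Hset a b c u -> Rtmap a b c (Rmap a b c u) = u.
Proof.
  intros Hy NH. pose proof (hyp_facts _ _ _ Hy) as [Hc Hn]. pose proof Hy as (H1&H2&H3&H4&H5).
  unfold Rmap at 1.
  destruct (excluded_middle_informative (in_per a 0 (c0 b c + a - b) u)) as [[p Hp]|N1].
  - unfold Rtmap.
    set (v := u + flcb b c * b + b).
    assert (Hv : c - c0 b c + b - a <= v - a * IZR (p+1) < c).
    { unfold v, flcb. rewrite plus_IZR. lra. }
    destruct (excluded_middle_informative (in_per a (c - a) (c - c0 b c) v)) as [[k Hk]|_].
    { exfalso. apply (per_disj a v k (p+1) (c-a) (c - c0 b c) (c - c0 b c + b - a) c); auto; lra. }
    destruct (excluded_middle_informative (in_per a (c - c0 b c) (c - c0 b c + b - a) v)) as [[k Hk]|_].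
    { exfalso. apply (per_disj a v k (p+1) (c - c0 b c) (c - c0 b c + b - a) (c - c0 b c + b - a) c); auto; lra. }
    unfold v; ring.
  - destruct (excluded_middle_informative (in_per a (c0 b c + a - b) (c0 b c) u)) as [Hh|N2].
    + exfalso; exact (NH Hh).
    + destruct (decomp a 0 u H1) as [p Hp].
      assert (c0 b c <= u - a * IZR p).
      { destruct (Rlt_le_dec (u - a * IZR p) (c0 b c)); [exfalso|lra].
        destruct (Rlt_le_dec (u - a * IZR p) (c0 b c + a - b)).
        - apply N1; exists p; lra.
        - apply N2; exists p; lra. }
      unfold Rtmap.
      destruct (excluded_middle_informative (in_per a (c - a) (c - c0 b c) (u + flcb b c * b))) as [_|N3].
      * ring.
      * exfalso. apply N3. exists (p+1)%Z. rewrite plus_IZR. unfold c0 in *. lra.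
Qed.

Lemma RRt a b c u : Hyp a b c -> ~ Htset a b c u -> Rmap a b c (Rtmap a b c u) = u.
Proof.
  intros Hy NH. pose proof (hyp_facts _ _ _ Hy) as [Hc Hn]. pose proof Hy as (H1&H2&H3&H4&H5).
  unfold Rtmap at 1.
  destruct (excluded_middle_informative (in_per a (c - a) (c - c0 b c) u)) as [[k Hk]|N1].
  - unfold Rmap.
    set (v := u - flcb b c * b).
    assert (Hv : c0 b c <= v - a * IZR (k-1) < a).
    { unfold v, flcb. rewrite minus_IZR. unfold c0, flcb in *. lra. }
    destruct (excluded_middle_informative (in_per a 0 (c0 b c + a - b) v)) as [[p Hp]|_].
    { exfalso. apply (per_disj a v p (k-1) 0 (c0 b c + a - b) (c0 b c) a); auto; lra. }
    destruct (excluded_middle_informative (in_per a (c0 b c + a - b) (c0 b c) v)) as [[p Hp]|_].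
    { exfalso. apply (per_disj a v p (k-1) (c0 b c + a - b) (c0 b c) (c0 b c) a); auto; lra. }
    unfold v; ring.
  - destruct (excluded_middle_informative (in_per a (c - c0 b c) (c - c0 b c + b - a) u)) as [Hh|N2].
    + exfalso; exact (NH Hh).
    + destruct (decomp a (c - a) u H1) as [k Hk].
      assert (c - c0 b c + b - a <= u - a * IZR k).
      { destruct (Rlt_le_dec (u - a * IZR k) (c - c0 b c + b - a)); [exfalso|lra].
        destruct (Rlt_le_dec (u - a * IZR k) (c - c0 b c)).
        - apply N1; exists k; lra.
        - apply N2; exists k; lra. }
      unfold Rmap.
      destruct (excluded_middle_informative (in_per a 0 (c0 b c + a - b) (u - flcb b c * b - b))) as [_|N3].
      * ring.
      * exfalso. apply N3. exists (k-1)%Z. rewrite minus_IZR. unfold c0 in *. lra.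
Qed.

Lemma search (p : Z -> R) v j0 : p j0 < v ->
  forall d : nat, v <= p (j0 + Z.of_nat d)%Z -> exists j, p (j - 1)%Z < v /\ v <= p j.
Proof. intros H0 d. induction d; intros Hd.
 - rewrite Z.add_0_r in Hd. lra.
 - destruct (Rle_lt_dec v (p (j0 + Z.of_nat d)%Z)).
   + apply IHd; auto.
   + exists (j0 + Z.of_nat (S d))%Z. split; [|exact Hd].
     replace (j0 + Z.of_nat (S d) - 1)%Z with (j0 + Z.of_nat d)%Z by lia. exact r.
Qed.

Lemma big_nat b y : 0 < b -> exists d : nat, y < b * IZR (Z.of_nat d).
Proof. intros Hb. destruct (archimed (y / b)) as [A _].
  exists (Z.to_nat (up (y/b))).
  assert (IZR (up (y/b)) <= IZR (Z.of_nat (Z.to_nat (up (y / b))))) by (apply IZR_le; lia).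
  assert (y = b * (y / b)) by (field; lra). nra. Qed.

Lemma maximal a b c (E : R -> Prop) : Hyp a b c ->
  maps_into (Rmap a b c) E -> maps_into (Rtmap a b c) E ->
  (forall t, E t -> ~ (Hset a b c t \/ Htset a b c t)) -> forall t, E t -> S_abc a b c t.
Proof.
  intros Hy HR HRt Hav t Et. pose proof Hy as (H1&H2&H3&H4&H5).
  set (pos := fun j : Z => if Z.leb 0 j then Nat.iter (Z.to_nat j) (Rmap a b c) t
                          else Nat.iter (Z.to_nat (-j)) (Rtmap a b c) t).
  assert (Pnn: forall d : nat, pos (Z.of_nat d) = Nat.iter d (Rmap a b c) t).
  { intros d. unfold pos. destruct (Z.leb_spec 0 (Z.of_nat d)); [|lia]. rewrite Nat2Z.id. reflexivity. }
  assert (Pnp: forall d : nat, pos (- Z.of_nat d)%Z = Nat.iter d (Rtmap a b c) t).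
  { intros d. unfold pos. destruct (Z.leb_spec 0 (- Z.of_nat d)).
    - replace d with 0%nat by lia. reflexivity.
    - rewrite Z.opp_involutive, Nat2Z.id. reflexivity. }
  assert (IE : forall d, E (Nat.iter d (Rmap a b c) t)).
  { induction d; simpl; auto. }
  assert (IEt : forall d, E (Nat.iter d (Rtmap a b c) t)).
  { induction d; simpl; auto. }
  assert (PE : forall j, E (pos j)).
  { intros j. destruct (Z_le_gt_dec 0 j).
    - replace j with (Z.of_nat (Z.to_nat j)) by lia. rewrite Pnn; auto.
    - replace j with (- Z.of_nat (Z.to_nat (-j)))%Z by lia. rewrite Pnp; auto. }
  assert (Step : forall j, pos (j+1)%Z = Rmap a b c (pos j)).
  { intros j. destruct (Z_le_gt_dec 0 j).
    - replace j with (Z.of_nat (Z.to_nat j)) by lia.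
      replace (Z.of_nat (Z.to_nat j) + 1)%Z with (Z.of_nat (S (Z.to_nat j))) by lia.
      rewrite !Pnn. reflexivity.
    - replace j with (- Z.of_nat (S (Z.to_nat (-j-1))))%Z by lia.
      replace (- Z.of_nat (S (Z.to_nat (-j-1))) + 1)%Z with (- Z.of_nat (Z.to_nat (-j-1)))%Z by lia.
      rewrite !Pnp. simpl. symmetry. apply RRt; auto.
      intros Hh. apply (Hav _ (IEt (Z.to_nat (-j-1)))). right; exact Hh. }
  assert (NHp : forall j, ~ Hset a b c (pos j)).
  { intros j Hh. apply (Hav _ (PE j)). left; exact Hh. }
  assert (Grow : forall j, pos j + b <= pos (j+1)%Z).
  { intros j. rewrite Step. destruct (R_step a b c (pos j) Hy (NHp j)) as [[K [HK EK]] _].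
    rewrite EK. apply IZR_le in HK. nra. }
  assert (Equiv : forall j m, pos (j+1)%Z - c < a * IZR m <-> pos j < a * IZR m).
  { intros j m. rewrite Step. destruct (R_step a b c (pos j) Hy (NHp j)) as [_ Q]. apply Q. }
  assert (Mono : forall j (d : nat), pos j <= pos (j + Z.of_nat d)%Z).
  { intros j d. induction d. rewrite Z.add_0_r; lra.
    replace (j + Z.of_nat (S d))%Z with (j + Z.of_nat d + 1)%Z by lia.
    pose proof (Grow (j + Z.of_nat d)%Z). lra. }
  assert (Mono' : forall j j', (j <= j')%Z -> pos j <= pos j').
  { intros j j' Hjj. replace j' with (j + Z.of_nat (Z.to_nat (j' - j)))%Z by lia. apply Mono. }
  assert (Up : forall d : nat, t + b * IZR (Z.of_nat d) <= pos (Z.of_nat d)).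
  { induction d. simpl. unfold pos. simpl. lra.
    replace (Z.of_nat (S d)) with (Z.of_nat d + 1)%Z by lia.
    pose proof (Grow (Z.of_nat d)). rewrite plus_IZR. lra. }
  assert (Down : forall d : nat, pos (- Z.of_nat d)%Z <= t - b * IZR (Z.of_nat d)).
  { induction d. simpl. unfold pos. simpl. lra.
    pose proof (Grow (- Z.of_nat (S d))%Z).
    replace (- Z.of_nat (S d) + 1)%Z with (- Z.of_nat d)%Z in H by lia.
    assert (IZR (Z.of_nat (S d)) = IZR (Z.of_nat d) + 1) by (rewrite Nat2Z.inj_succ, succ_IZR; ring). rewrite H0. lra. }
  assert (Shift : forall j, exists k, pos j = t + b * IZR k).
  { assert (A1 : forall d, exists k, Nat.iter d (Rmap a b c) t = t + b * IZR k).
    { induction d. exists 0%Z. simpl; ring. destruct IHd as [k Hk].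
      destruct (Rmap_shift a b c (Nat.iter d (Rmap a b c) t)) as [K HK].
      exists (k + K)%Z. simpl. rewrite HK, Hk, plus_IZR. ring. }
    assert (A2 : forall d, exists k, Nat.iter d (Rtmap a b c) t = t + b * IZR k).
    { induction d. exists 0%Z. simpl; ring. destruct IHd as [k Hk].
      destruct (Rtmap_shift a b c (Nat.iter d (Rtmap a b c) t)) as [K HK].
      exists (k + K)%Z. simpl. rewrite HK, Hk, plus_IZR. ring. }
    intros j. destruct (Z_le_gt_dec 0 j).
    - replace j with (Z.of_nat (Z.to_nat j)) by lia. rewrite Pnn; auto.
    - replace j with (- Z.of_nat (Z.to_nat (-j)))%Z by lia. rewrite Pnp; auto. }
  set (x := fun k => if excluded_middle_informative (exists j, pos j = t + b * IZR k) then true else false).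
  apply (Good_S a b c t x). split.
  { unfold x. destruct (excluded_middle_informative _) as [_|N]; [reflexivity|].
    exfalso; apply N. exists 0%Z. unfold pos; simpl; ring. }
  intros m. set (v := a * IZR m).
  destruct (big_nat b (v - t) ltac:(lra)) as [d1 Hd1].
  destruct (big_nat b (t - v) ltac:(lra)) as [d0 Hd0].
  pose proof (Up d1). pose proof (Down d0).
  destruct (search pos v (- Z.of_nat d0)%Z ltac:(lra) (Z.to_nat (Z.of_nat d1 + Z.of_nat d0)))
    as [j [Hj1 Hj2]].
  { replace (- Z.of_nat d0 + Z.of_nat (Z.to_nat (Z.of_nat d1 + Z.of_nat d0)))%Z with (Z.of_nat d1) by lia.
    lra. }
  destruct (Shift j) as [k Hk]. exists k. split.
  - split.
    + unfold x. destruct (excluded_middle_informative _) as [_|N]; [reflexivity|].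
      exfalso; apply N; exists j; exact Hk.
    + unfold W. pose proof (proj2 (Equiv (j-1)%Z m) Hj1).
      replace (j - 1 + 1)%Z with j in H6 by lia. fold v in H6 |- *. split; lra.
  - intros k' Hx' [W1 W2]. unfold x in Hx'.
    destruct (excluded_middle_informative _) as [[j' Hj']|_]; [|discriminate].
    fold v in W1, W2.
    assert (Hj'1 : pos (j'-1)%Z < v).
    { apply (proj1 (Equiv (j'-1)%Z m)). replace (j' - 1 + 1)%Z with j' by lia. fold v. lra. }
    destruct (Z.lt_total j' j) as [Hl|[He|Hg]].
    + pose proof (Mono' j' (j-1)%Z ltac:(lia)). lra.
    + subst j'. assert (IZR k' = IZR k) by nra. apply eq_IZR; auto.
    + pose proof (Mono' j (j'-1)%Z ltac:(lia)). lra.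
Qed.

Lemma R_fix a b c u : Hyp a b c -> Hset a b c u -> Rmap a b c u = u.
Proof. intros Hy [k Hk]. pose proof Hy as (H1&H2&H3&H4&H5). unfold Rmap.
  destruct (excluded_middle_informative _) as [[p Hp]|_].
  { exfalso. apply (per_disj a u p k 0 (c0 b c + a - b) (c0 b c + a - b) (c0 b c)); auto; lra. }
  destruct (excluded_middle_informative _) as [_|N]; [reflexivity|].
  exfalso; apply N; exists k; exact Hk. Qed.

Lemma Rt_fix a b c u : Hyp a b c -> Htset a b c u -> Rtmap a b c u = u.
Proof. intros Hy [k Hk]. pose proof Hy as (H1&H2&H3&H4&H5). unfold Rtmap.
  destruct (excluded_middle_informative _) as [[p Hp]|_].
  { exfalso. apply (per_disj a u p k (c - a) (c - c0 b c) (c - c0 b c) (c - c0 b c + b - a)); auto; lra. }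
  destruct (excluded_middle_informative _) as [_|N]; [reflexivity|].
  exfalso; apply N; exists k; exact Hk. Qed.

Theorem theorem4p1 (a b c : R) :
  0 < a -> a < b -> b < c ->
  b - a < c0 b c -> c0 b c < a ->
  (* (i) *)
  ((maps_into (Rmap a b c) (S_abc a b c) /\
    maps_into (Rtmap a b c) (S_abc a b c) /\
    (forall t, S_abc a b c t -> ~ (Hset a b c t \/ Htset a b c t))) /\
   (forall E : R -> Prop,
      maps_into (Rmap a b c) E -> maps_into (Rtmap a b c) E ->
      (forall t, E t -> ~ (Hset a b c t \/ Htset a b c t)) ->
      forall t, E t -> S_abc a b c t)) /\
  (* (ii) *)
  ((maps_into (Rmap a b c) (fun t => ~ S_abc a b c t) /\
    maps_into (Rtmap a b c) (fun t => ~ S_abc a b c t) /\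
    (forall t, Hset a b c t \/ Htset a b c t -> ~ S_abc a b c t)) /\
   (forall F : R -> Prop,
      maps_into (Rmap a b c) F -> maps_into (Rtmap a b c) F ->
      (forall t, Hset a b c t \/ Htset a b c t -> F t) ->
      forall t, ~ S_abc a b c t -> F t)).
Proof.
  intros H1 H2 H3 H4 H5.
  assert (Hy : Hyp a b c) by (repeat split; assumption).
  assert (SR : maps_into (Rmap a b c) (S_abc a b c)).
  { intros t HS. destruct (S_Good _ _ _ _ HS) as [x G]. exact (R_S _ _ _ _ _ Hy G). }
  assert (SRt : maps_into (Rtmap a b c) (S_abc a b c)).
  { intros t HS. destruct (S_Good _ _ _ _ HS) as [x G]. exact (Rt_S _ _ _ _ _ Hy G). }
  assert (Sav : forall t, S_abc a b c t -> ~ (Hset a b c t \/ Htset a b c t)).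
  { intros t HS [Hh|Hh]; destruct (S_Good _ _ _ _ HS) as [x G].
    exact (noH _ _ _ _ _ Hy G Hh). exact (noHt _ _ _ _ _ Hy G Hh). }
  split; [split; [auto|]|split; [split; [|split]|]].
  - intros E HR HRt Hav. exact (maximal a b c E Hy HR HRt Hav).
  - intros t NS HSR. apply NS. destruct (classic (Hset a b c t)) as [Hh|Hh].
    + rewrite (R_fix a b c t Hy Hh) in HSR. exact HSR.
    + rewrite <- (RtR a b c t Hy Hh). apply SRt. exact HSR.
  - intros t NS HSR. apply NS. destruct (classic (Htset a b c t)) as [Hh|Hh].
    + rewrite (Rt_fix a b c t Hy Hh) in HSR. exact HSR.
    + rewrite <- (RRt a b c t Hy Hh). apply SR. exact HSR.
  - intros t Hh HS. exact (Sav t HS Hh).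
  - intros F HRF HRtF HF t NS. apply NNPP; intro NF. apply NS.
    apply (maximal a b c (fun u => ~ F u) Hy); [| | |exact NF].
    + intros u NFu FRu. apply NFu. destruct (classic (Hset a b c u)) as [Hh|Hh].
      * apply HF; left; exact Hh.
      * rewrite <- (RtR a b c u Hy Hh). apply HRtF. exact FRu.
    + intros u NFu FRu. apply NFu. destruct (classic (Htset a b c u)) as [Hh|Hh].
      * apply HF; right; exact Hh.
      * rewrite <- (RRt a b c u Hy Hh). apply HRF. exact FRu.
    + intros u NFu Hh. apply NFu. apply HF. exact Hh.
Qed.
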